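(* Let $1\le M\le N$. There is a constant $c_M>0$ (depending only on $M$) such that the following holds for every complex $N\times M$ matrix $\mathbf{H}$ of full column rank. Let $d_{\mathbf{H}}$ be the minimum distance of the lattice $\{\mathbf{H}\mathbf{z}:\mathbf{z}\in\mathbb{Z}[i]^M\}$, let $\mathbf{B}=\mathbf{H}^{-\mathtt{H}}\mathbf{U}$ (with $\mathbf{U}$ unimodular) be an LLL-reduced basis of the lattice generated by $\mathbf{H}^{-\mathtt{H}}=\mathbf{H}(\mathbf{H}^{\mathtt{H}}\mathbf{H})^{-1}$, and let $\mathbf{y}=\mathbf{H}\mathbf{x}+\mathbf{w}$ with $\mathbf{x}\in\mathbb{Z}[i]^M$, $\mathbf{w}\in\mathbb{C}^N$. If $\|\mathbf{w}\|<c_M d_{\mathbf{H}}$, then the LLL-aided (type I) decoder correctly decodes, i.e. $\widehat{\mathbf{x}}=\mathbf{x}$.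
   Context: $(\cdot)^{\mathtt{H}}$ is the conjugate transpose; $\mathbb{Z}[i]$ is the ring of Gaussian integers; a unimodular matrix is a matrix with entries in $\mathbb{Z}[i]$ whose inverse also has entries in $\mathbb{Z}[i]$. The lattice generated by an $N\times M$ matrix $\mathbf{G}$ of full column rank is $\{\mathbf{G}\mathbf{z}:\mathbf{z}\in\mathbb{Z}[i]^M\}$; its minimum distance is the smallest norm of a nonzero lattice vector. A basis is LLL-reduced in the sense of the Lenstra–Lenstra–Lovász reduction (extended to complex lattices over $\mathbb{Z}[i]$): with Gram–Schmidt vectors $\mathbf{b}_k^*$ and coefficients $\mu_{k,j}=\langle\mathbf{b}_k,\mathbf{b}_j^*\rangle/\|\mathbf{b}_j^*\|^2$, one has $|\mathrm{Re}\,\mu_{k,j}|,|\mathrm{Im}\,\mu_{k,j}|\le 1/2$ for $j<k$ and $\|\mathbf{b}_k^*\|^2\ge(3/4-|\mu_{k,k-1}|^2)\|\mathbf{b}_{k-1}^*\|^2$. The LLL-aided (type I) decoder computes $\tilde{\mathbf{x}}$ as the closest point of $\mathbb{Z}[i]^M$ to $\mathbf{B}^{\mathtt{H}}\mathbf{y}$ and outputs $\widehat{\mathbf{x}}=\mathbf{U}^{-\mathtt{H}}\tilde{\mathbf{x}}$. *)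

(* Defs.v *)
From mathcomp Require Import all_boot all_order all_algebra reals complex.
Set Implicit Arguments. Unset Strict Implicit. Unset Printing Implicit Defensive.
Import Order.TTheory GRing.Theory Num.Theory.
Local Open Scope ring_scope.

Section Defs.
Variable R : realType.
Local Notation C := (R[i]).

Definition gauss_int (z : C) : Prop :=
  exists a b : int, z = Complex (a%:~R) (b%:~R).

Definition gauss_mx m n (A : 'M[C]_(m, n)) : Prop :=
  forall i j, gauss_int (A i j).

Definition ctrmx m n (A : 'M[C]_(m, n)) : 'M[C]_(n, m) := (map_mx (@conjc R) A)^T.

Definition unimodular n (U : 'M[C]_n) : Prop :=
  gauss_mx U /\ U \in unitmx /\ gauss_mx (invmx U).

(* Hermitian inner product <u, v> = v^H u  (linear in u) *)
Definition cdot n (u v : 'cV[C]_n) : C := \sum_i u i 0 * conjc (v i 0).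

Definition sqnorm n (v : 'cV[C]_n) : R :=
  \sum_i (complex.Re (v i 0) ^+ 2 + complex.Im (v i 0) ^+ 2).
Definition vnorm n (v : 'cV[C]_n) : R := Num.sqrt (sqnorm v).

Definition csq (z : C) : R := complex.Re z ^+ 2 + complex.Im z ^+ 2.

Definition is_min_dist N M (H : 'M[C]_(N, M)) (d : R) : Prop :=
  (exists z : 'cV[C]_M, gauss_mx z /\ z != 0 /\ vnorm (H *m z) = d) /\
  (forall z : 'cV[C]_M, gauss_mx z -> z != 0 -> d <= vnorm (H *m z)).

(* Gram-Schmidt orthogonalization of a sequence of vectors b_0, b_1, ... :
   b_k^* = b_k - \sum_{j<k} mu_{k,j} b_j^*,  mu_{k,j} = <b_k,b_j^*>/||b_j^*||^2 *)
Definition gs_coef n (u v : 'cV[C]_n) : C := cdot u v / cdot v v.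

Fixpoint gs_aux n (bs acc : seq 'cV[C]_n) : seq 'cV[C]_n :=
  match bs with
  | [::] => acc
  | b :: bs' =>
      gs_aux bs' (rcons acc (b - \sum_(j < size acc) gs_coef b acc`_j *: acc`_j))
  end.

Definition gso n (bs : seq 'cV[C]_n) : seq 'cV[C]_n := gs_aux bs [::].

Definition cols N M (B : 'M[C]_(N, M)) : seq 'cV[C]_N :=
  [seq col j B | j <- enum 'I_M].

Definition gs_vec N M (B : 'M[C]_(N, M)) (k : nat) : 'cV[C]_N := (gso (cols B))`_k.
Definition gs_mu N M (B : 'M[C]_(N, M)) (k j : nat) : C :=
  gs_coef (cols B)`_k (gs_vec B j).

(* LLL-reduced (complex LLL, delta = 3/4) *)
Definition LLL_reduced N M (B : 'M[C]_(N, M)) : Prop :=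
  (forall k j : nat, (j < k < M)%N ->
     `|complex.Re (gs_mu B k j)| <= 1/2 /\ `|complex.Im (gs_mu B k j)| <= 1/2) /\
  (forall k : nat, (1 <= k < M)%N ->
     sqnorm (gs_vec B k) >= (3/4 - csq (gs_mu B k k.-1)) * sqnorm (gs_vec B k.-1)).

Definition closest_gauss M (v t : 'cV[C]_M) : Prop :=
  gauss_mx t /\ forall z : 'cV[C]_M, gauss_mx z -> vnorm (v - t) <= vnorm (v - z).

End Defs.

(* Main.v *)
Require Import Defs.
From mathcomp Require Import all_boot all_order all_algebra reals complex.
From mathcomp Require Import ring lra zify.
Import Order.TTheory GRing.Theory Num.Theory.
Local Open Scope complex_scope.
Local Open Scope ring_scope.
Set Implicit Arguments. Unset Strict Implicit. Unset Printing Implicit Defensive.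

Section Aux.
Variable R : realType.
Local Notation C := (R[i]).
Local Notation cj := (@conjc R).

Lemma ReD (x y : C) : complex.Re (x + y) = complex.Re x + complex.Re y.
Proof. by case: x; case: y. Qed.
Lemma ImD (x y : C) : complex.Im (x + y) = complex.Im x + complex.Im y.
Proof. by case: x; case: y. Qed.
Lemma ReN (x : C) : complex.Re (- x) = - complex.Re x.
Proof. by case: x. Qed.
Lemma ImN (x : C) : complex.Im (- x) = - complex.Im x.
Proof. by case: x. Qed.
Lemma ReM (x y : C) : complex.Re (x * y) = complex.Re x * complex.Re y - complex.Im x * complex.Im y.
Proof. by case: x; case: y. Qed.
Lemma ImM (x y : C) : complex.Im (x * y) = complex.Re x * complex.Im y + complex.Im x * complex.Re y.
Proof. by case: x => a b; case: y => c e /=; rewrite addrC. Qed.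
Lemma ReJ (x : C) : complex.Re (cj x) = complex.Re x. Proof. by case: x. Qed.
Lemma ImJ (x : C) : complex.Im (cj x) = - complex.Im x. Proof. by case: x. Qed.
Lemma Re_sum (I : Type) (r : seq I) (P : pred I) (F : I -> C) :
  complex.Re (\sum_(i <- r | P i) F i) = \sum_(i <- r | P i) complex.Re (F i).
Proof. exact: (big_morph _ ReD). Qed.
Lemma Im_sum (I : Type) (r : seq I) (P : pred I) (F : I -> C) :
  complex.Im (\sum_(i <- r | P i) F i) = \sum_(i <- r | P i) complex.Im (F i).
Proof. exact: (big_morph _ ImD). Qed.

Lemma mulJ (z : C) : z * cj z = (csq z)%:C.
Proof.
case: z => a b; rewrite /csq /=; apply/eqP; rewrite eq_complex /=; apply/andP; split;
  apply/eqP; rewrite ?expr2; ring.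
Qed.

Lemma csq_ge0 (z : C) : 0 <= csq z.
Proof. by rewrite /csq addr_ge0 // sqr_ge0. Qed.

Lemma csq_eq0 (z : C) : csq z = 0 -> z = 0.
Proof.
case: z => a b; rewrite /csq /= => h.
have /andP[ha hb] : (a ^+ 2 == 0) && (b ^+ 2 == 0) by rewrite -paddr_eq0 ?sqr_ge0 // h.
by move: ha hb; rewrite !sqrf_eq0 => /eqP-> /eqP->.
Qed.

Lemma sqnorm_ge0 n (v : 'cV[C]_n) : 0 <= sqnorm v.
Proof. by apply: sumr_ge0 => i _; exact: csq_ge0. Qed.

Lemma sqnorm_eq0 n (v : 'cV[C]_n) : sqnorm v = 0 -> v = 0.
Proof.
move=> h; apply/matrixP => i j; rewrite ord1 mxE; apply: csq_eq0.
exact: (psumr_eq0P (fun i _ => csq_ge0 (v i 0)) h).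
Qed.

Lemma cdotDl n (u v w : 'cV[C]_n) : cdot (u + v) w = cdot u w + cdot v w.
Proof. by rewrite /cdot -big_split /=; apply: eq_bigr => i _; rewrite mxE mulrDl. Qed.
Lemma cdotZl n a (u w : 'cV[C]_n) : cdot (a *: u) w = a * cdot u w.
Proof. by rewrite /cdot mulr_sumr; apply: eq_bigr => i _; rewrite mxE mulrA. Qed.
Lemma cdotNl n (u w : 'cV[C]_n) : cdot (- u) w = - cdot u w.
Proof. by rewrite -scaleN1r cdotZl mulN1r. Qed.
Lemma cdotBl n (u v w : 'cV[C]_n) : cdot (u - v) w = cdot u w - cdot v w.
Proof. by rewrite cdotDl cdotNl. Qed.
Lemma cdot0l n (w : 'cV[C]_n) : cdot 0 w = 0.
Proof. by rewrite /cdot big1 // => i _; rewrite mxE mul0r. Qed.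
Lemma cdot_suml n (I : finType) (P : pred I) (F : I -> 'cV[C]_n) w :
  cdot (\sum_(i | P i) F i) w = \sum_(i | P i) cdot (F i) w.
Proof.
apply: (big_rec2 (fun a b => cdot b w = a)); first by rewrite cdot0l.
by move=> i x y _ <-; rewrite cdotDl.
Qed.
Lemma cdotC n (u v : 'cV[C]_n) : cdot v u = cj (cdot u v).
Proof.
rewrite /cdot rmorph_sum; apply: eq_bigr => i _.
by rewrite rmorphM /= conjcK mulrC.
Qed.
Lemma cdotDr n (u v w : 'cV[C]_n) : cdot w (u + v) = cdot w u + cdot w v.
Proof. by rewrite cdotC cdotDl rmorphD /= -!cdotC. Qed.
Lemma cdotZr n a (u w : 'cV[C]_n) : cdot w (a *: u) = cj a * cdot w u.
Proof. by rewrite cdotC cdotZl rmorphM /= -cdotC. Qed.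
Lemma cdotBr n (u v w : 'cV[C]_n) : cdot w (u - v) = cdot w u - cdot w v.
Proof. by rewrite cdotC cdotBl rmorphB /= -!cdotC. Qed.
Lemma cdot0r n (w : 'cV[C]_n) : cdot w 0 = 0.
Proof. by rewrite cdotC cdot0l rmorph0. Qed.
Lemma cdot_sumr n (I : finType) (P : pred I) (F : I -> 'cV[C]_n) w :
  cdot w (\sum_(i | P i) F i) = \sum_(i | P i) cdot w (F i).
Proof.
rewrite cdotC cdot_suml rmorph_sum /=; apply: eq_bigr => i _.
by rewrite -cdotC.
Qed.
Lemma cdot_self n (v : 'cV[C]_n) : cdot v v = (sqnorm v)%:C.
Proof.
rewrite /cdot /sqnorm rmorph_sum; apply: eq_bigr => i _; exact: mulJ.
Qed.

End Aux.

Section GS.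
Variable R : realType.
Local Notation C := (R[i]).
Local Notation cj := (@conjc R).

Lemma gs_aux_spec n (bs acc : seq 'cV[C]_n) :
  [/\ size (gs_aux bs acc) = (size acc + size bs)%N,
      forall j, (j < size acc)%N -> (gs_aux bs acc)`_j = acc`_j &
      forall k, (k < size bs)%N -> (gs_aux bs acc)`_(size acc + k) =
         bs`_k - \sum_(j < size acc + k) gs_coef bs`_k (gs_aux bs acc)`_j *: (gs_aux bs acc)`_j].
Proof.
elim: bs acc => [|b bs IH] acc /=.
  by split=> //; rewrite addn0.
set v := b - _.
have [h1 h2 h3] := IH (rcons acc v).
have hs : size (rcons acc v) = (size acc).+1 by rewrite size_rcons.
split.
- by rewrite h1 hs addSnnS.
- move=> j hj; rewrite h2 ?hs ?(ltnW hj) ?ltnS ?(ltnW hj) //.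
  by rewrite nth_rcons hj.
- case=> [|k] hk.
    rewrite addn0 h2 ?hs // nth_rcons ltnn eqxx /v; congr (_ - _).
    apply: eq_bigr => j _; rewrite h2 ?hs ?ltnS ?(ltnW (ltn_ord j)) //.
    by rewrite nth_rcons ltn_ord.
  by rewrite -addSnnS -hs h3.
Qed.

Lemma size_cols N M (B : 'M[C]_(N, M)) : size (cols B) = M.
Proof. by rewrite /cols size_map size_enum_ord. Qed.

Lemma nth_cols N M (B : 'M[C]_(N, M)) (j : 'I_M) : (cols B)`_j = col j B.
Proof.
by rewrite /cols (nth_map j) ?size_enum_ord ?ltn_ord // nth_ord_enum.
Qed.

Lemma gs_eq N M (B : 'M[C]_(N, M)) k : (k < M)%N ->
  gs_vec B k = (cols B)`_k - \sum_(j < k) gs_mu B k j *: gs_vec B j.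
Proof.
move=> hk; have [_ _ h3] := gs_aux_spec (cols B) [::].
by rewrite /gs_vec /gso -[k]add0n h3 // size_cols.
Qed.

Lemma cdot_self_eq0 n (v : 'cV[C]_n) : cdot v v = 0 -> v = 0.
Proof. by rewrite cdot_self => -[/sqnorm_eq0]. Qed.

Lemma gs_orth N M (B : 'M[C]_(N, M)) k j : (j < k)%N -> (k < M)%N ->
  cdot (gs_vec B k) (gs_vec B j) = 0.
Proof.
elim/ltn_ind: k j => k IH j hjk hkM.
rewrite gs_eq // cdotBl cdot_suml.
rewrite (bigD1 (Ordinal hjk)) //= big1; last first.
  move=> i hi; rewrite cdotZl.
  have hij : nat_of_ord i != j by apply: contra hi => /eqP h; apply/eqP/val_inj.
  case: (ltngtP i j) hij => // h _.
  - rewrite cdotC IH //; last by apply: ltn_trans hkM.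
    by rewrite rmorph0 mulr0.
  - by rewrite IH // ?mulr0 // (ltn_trans _ hkM).
rewrite addr0 cdotZl /gs_mu /gs_coef.
have [h0|h0] := eqVneq (cdot (gs_vec B j) (gs_vec B j)) 0.
  by rewrite h0 mulr0 (cdot_self_eq0 h0) cdot0r subr0.
by rewrite divfK // subrr.
Qed.

End GS.

Section Dual.
Variable R : realType.
Local Notation C := (R[i]).
Local Notation cj := (@conjc R).

Lemma mulmx_sum_col' N M (B : 'M[C]_(N, M)) (a : 'cV[C]_M) :
  B *m a = \sum_k a k 0 *: col k B.
Proof.
apply/matrixP => i j; rewrite ord1 !mxE summxE; apply: eq_bigr => k _.
by rewrite !mxE mulrC.
Qed.

Variables (N m : nat) (B : 'M[C]_(N, m.+1)).
Local Notation g := (gs_vec B).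
Local Notation b := (fun k => (cols B)`_k).

Definition inspan (v : 'cV[C]_N) := exists al : nat -> C, v = \sum_(i < m.+1) al i *: g i.

Lemma inspan0 : inspan 0.
Proof. by exists (fun _ => 0); rewrite big1 // => i _; rewrite scale0r. Qed.
Lemma inspanD u v : inspan u -> inspan v -> inspan (u + v).
Proof.
move=> [a ->] [c ->]; exists (fun i => a i + c i).
by rewrite -big_split; apply: eq_bigr => i _; rewrite scalerDl.
Qed.
Lemma inspanZ s u : inspan u -> inspan (s *: u).
Proof.
move=> [a ->]; exists (fun i => s * a i).
by rewrite scaler_sumr; apply: eq_bigr => i _; rewrite scalerA.
Qed.
Lemma inspan_sum (I : finType) (P : pred I) F :
  (forall i, P i -> inspan (F i)) -> inspan (\sum_(i | P i) F i).
Proof.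
move=> h; apply: (big_ind inspan) => //; [exact: inspan0 | exact: inspanD].
Qed.
Lemma inspan_g k : (k < m.+1)%N -> inspan (g k).
Proof.
move=> hk; exists (fun i => (i == k)%:R).
rewrite (bigD1 (Ordinal hk)) //= eqxx scale1r big1 ?addr0 // => i hi.
have -> : (nat_of_ord i == k) = false.
  by apply/negbTE; apply: contra hi => /eqP h; apply/eqP/val_inj.
by rewrite scale0r.
Qed.
Lemma inspan_b k : (k < m.+1)%N -> inspan (b k).
Proof.
move=> hk; have e := gs_eq B hk.
have -> : b k = g k + \sum_(j < k) gs_mu B k j *: g j by rewrite e subrK.
apply: inspanD; first exact: inspan_g.
apply: inspan_sum => j _; apply: inspanZ; apply: inspan_g.
exact: ltn_trans (ltn_ord j) hk.
Qed.

Lemma dual_norm (d : 'cV[C]_N) (a : 'cV[C]_m.+1) :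
  d = B *m a ->
  (forall j, (j < m.+1)%N -> cdot d (b j) = (j == m)%:R) ->
  sqnorm (g m) * sqnorm d = 1.
Proof.
move=> hda hd.
have h0 : forall j, (j < m)%N -> cdot d (g j) = 0.
  elim/ltn_ind => j IH hj.
  rewrite (gs_eq B) ?(ltn_trans hj) // cdotBr hd ?(ltn_trans hj) //.
  rewrite (_ : (j == m) = false) ?subn0; last by apply/negbTE; rewrite neq_ltn hj.
  rewrite cdot_sumr big1 ?subr0 // => i _.
  by rewrite cdotZr IH ?mulr0 // (ltn_trans _ hj).
have h1 : cdot d (g m) = 1.
  rewrite (gs_eq B) // cdotBr hd // eqxx cdot_sumr big1 ?subr0 // => i _.
  by rewrite cdotZr h0 ?mulr0.
have [al hal] : inspan d.
  rewrite hda mulmx_sum_col'; apply: inspan_sum => k _; apply: inspanZ.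
  by have := inspan_b (ltn_ord k); rewrite nth_cols.
have e1 : cdot d d = cj (al m).
  rewrite {2}hal cdot_sumr big_ord_recr /= big1 ?add0r.
    by rewrite cdotZr h1 mulr1.
  by move=> i _; rewrite cdotZr h0 ?mulr0.
have e2 : cdot (g m) d = cj (al m) * cdot (g m) (g m).
  rewrite {1}hal cdot_sumr big_ord_recr /= big1 ?add0r.
    by rewrite cdotZr.
  by move=> i _; rewrite cdotZr (gs_orth B) ?mulr0.
have e3 : cdot (g m) d = 1 by rewrite cdotC h1 rmorph1.
have : cdot (g m) (g m) * cdot d d = 1 by rewrite e1 mulrC -e2 e3.
rewrite !cdot_self -rmorphM /=.
by case.
Qed.

End Dual.

Section Bounds.
Variable R : realType.
Local Notation C := (R[i]).
Local Notation cj := (@conjc R).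

Lemma half_sq (x : R) : `|x| <= 1/2 -> x ^+ 2 <= 1/4.
Proof.
rewrite ler_norml => /andP[h1 h2].
have : 0 <= (1/2 - x) * (1/2 + x) by rewrite mulr_ge0 //; lra.
rewrite expr2; lra.
Qed.

Lemma lll_step N m (B : 'M[C]_(N, m.+1)) : LLL_reduced B ->
  forall k, (1 <= k <= m)%N -> sqnorm (gs_vec B k.-1) <= 4 * sqnorm (gs_vec B k).
Proof.
move=> [h1 h2] k hk.
have hk' : (1 <= k < m.+1)%N by rewrite ltnS.
have := h2 k hk'.
have hj : (k.-1 < k < m.+1)%N by case: k hk hk' => // k _ /andP[_ h]; rewrite /= ltnSn h.
have [hr hi] := h1 k k.-1 hj.
have := half_sq hr; have := half_sq hi.
have := sqnorm_ge0 (gs_vec B k.-1).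
rewrite /csq; set a := sqnorm _; set b := sqnorm _.
set x := complex.Re _; set y := complex.Im _.
move=> ha hy hx hab.
have : 0 <= (1/2 - (x ^+ 2 + y ^+ 2)) * a by rewrite mulr_ge0 //; lra.
lra.
Qed.

Lemma lll_chain N m (B : 'M[C]_(N, m.+1)) : LLL_reduced B ->
  forall j, (j <= m)%N -> sqnorm (gs_vec B j) <= 4 ^+ (m - j) * sqnorm (gs_vec B m).
Proof.
move=> hL.
suff H : forall t j, (j + t)%N = m -> sqnorm (gs_vec B j) <= 4 ^+ t * sqnorm (gs_vec B m).
  by move=> j hj; apply: H; rewrite subnKC.
elim=> [|t IH] j hjt.
  by rewrite addn0 in hjt; rewrite hjt expr0 mul1r.
have hs : sqnorm (gs_vec B j) <= 4 * sqnorm (gs_vec B j.+1).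
  by apply: (lll_step hL (k := j.+1)); rewrite /= -hjt addnS ltnS leq_addr.
apply: le_trans hs _.
rewrite exprS -mulrA ler_pM2l //; apply: IH; by rewrite addSnnS.
Qed.

Lemma term_ineq (s a b c e : R) : 0 < s ->
  0 <= s * (a ^+ 2 + c ^+ 2) + (b ^+ 2 + e ^+ 2) / s - 2 * (a * b + c * e).
Proof.
move=> hs; set t := s^-1.
have ht : s * t = 1 by rewrite /t mulfV // gt_eqF.
have ht0 : 0 <= t by rewrite /t invr_ge0 ltW.
have E : t * ((s * a - b) ^+ 2 + (s * c - e) ^+ 2) =
   (s * t) * (s * (a ^+ 2 + c ^+ 2)) - 2 * (s * t) * (a * b + c * e) + t * (b ^+ 2 + e ^+ 2).
  by ring.
rewrite ht in E.
have : 0 <= t * ((s * a - b) ^+ 2 + (s * c - e) ^+ 2) by rewrite mulr_ge0 // addr_ge0 // sqr_ge0.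
rewrite E; rewrite mulrC; lra.
Qed.

Lemma term_ineq2 (s a b c e : R) : 0 < s ->
  0 <= s * (a ^+ 2 + c ^+ 2) + (b ^+ 2 + e ^+ 2) / s + 2 * (a * b + c * e).
Proof.
move=> hs; have := @term_ineq s (-a) b (-c) e hs.
by rewrite !sqrrN !mulNr => h; lra.
Qed.

Lemma abs_le2 (x y : R) : 0 <= y - 2 * x -> 0 <= y + 2 * x -> 2 * `|x| <= y.
Proof.
move=> h1 h2; case: (lerP 0 x) => hx.
  by rewrite ger0_norm //; lra.
by rewrite ltr0_norm //; lra.
Qed.

Lemma cs_Re n (s : R) (w g : 'cV[C]_n) : 0 < s ->
  2 * `|complex.Re (cdot w g)| <= s * sqnorm w + sqnorm g / s.
Proof.
move=> hs; rewrite /cdot Re_sum /sqnorm mulr_sumr mulr_suml -big_split.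
apply: abs_le2; rewrite mulr_sumr ?(=^~sumrB, =^~big_split); apply: sumr_ge0 => i _;
  rewrite [complex.Re (_ * _)](_ : _ = complex.Re (w i 0) * complex.Re (g i 0) + complex.Im (w i 0) * complex.Im (g i 0)).
- exact: (@term_ineq s (complex.Re (w i 0)) (complex.Re (g i 0)) (complex.Im (w i 0)) (complex.Im (g i 0)) hs).
- by case: (w i 0) => a b; case: (g i 0) => c e /=; rewrite mulrN opprK.
- exact: (@term_ineq2 s (complex.Re (w i 0)) (complex.Re (g i 0)) (complex.Im (w i 0)) (complex.Im (g i 0)) hs).
- by case: (w i 0) => a b; case: (g i 0) => c e /=; rewrite mulrN opprK.
Qed.

Lemma cs_Im n (s : R) (w g : 'cV[C]_n) : 0 < s ->
  2 * `|complex.Im (cdot w g)| <= s * sqnorm w + sqnorm g / s.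
Proof.
move=> hs; rewrite /cdot Im_sum /sqnorm mulr_sumr mulr_suml -big_split.
apply: abs_le2; rewrite mulr_sumr ?(=^~sumrB, =^~big_split); apply: sumr_ge0 => i _;
  rewrite [complex.Im (_ * _)](_ : _ = complex.Im (w i 0) * complex.Re (g i 0) + (- complex.Re (w i 0)) * complex.Im (g i 0)).
- have := @term_ineq s (complex.Im (w i 0)) (complex.Re (g i 0)) (- complex.Re (w i 0)) (complex.Im (g i 0)) hs.
  by rewrite sqrrN (addrC (complex.Im (w i 0) ^+ 2)).
- by case: (w i 0) => a b; case: (g i 0) => c e /=; rewrite mulrN mulNr addrC.
- have := @term_ineq2 s (complex.Im (w i 0)) (complex.Re (g i 0)) (- complex.Re (w i 0)) (complex.Im (g i 0)) hs.
  by rewrite sqrrN (addrC (complex.Im (w i 0) ^+ 2)).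
- by case: (w i 0) => a b; case: (g i 0) => c e /=; rewrite mulrN mulNr addrC.
Qed.

Lemma mu_term (mu z : C) (E : R) :
  `|complex.Re mu| <= 1/2 -> `|complex.Im mu| <= 1/2 ->
  `|complex.Re z| <= E -> `|complex.Im z| <= E ->
  `|complex.Re (cj mu * z)| <= E /\ `|complex.Im (cj mu * z)| <= E.
Proof.
case: mu => p q; case: z => r t /= hp hq hr ht.
have hE : 0 <= E by apply: le_trans hr.
have b1 : `|p * r| <= 1/2 * E by rewrite normrM ler_pM.
have b2 : `|q * t| <= 1/2 * E by rewrite normrM ler_pM.
have b3 : `|p * t| <= 1/2 * E by rewrite normrM ler_pM.
have b4 : `|q * r| <= 1/2 * E by rewrite normrM ler_pM.
split.
  rewrite mulNr opprK; apply: le_trans (ler_normD _ _) _; lra.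
rewrite mulNr; apply: le_trans (ler_normD _ _) _; rewrite normrN; lra.
Qed.

Lemma comb N m (B : 'M[C]_(N, m.+1)) (w : 'cV[C]_N) (E : R) : LLL_reduced B ->
  (forall j, (j <= m)%N -> `|complex.Re (cdot w (gs_vec B j))| <= E /\
                          `|complex.Im (cdot w (gs_vec B j))| <= E) ->
  forall k, (k <= m)%N -> `|complex.Re (cdot w (cols B)`_k)| <= k.+1%:R * E /\
                          `|complex.Im (cdot w (cols B)`_k)| <= k.+1%:R * E.
Proof.
move=> [hL _] hg k hk.
have hkM : (k < m.+1)%N by [].
have e := gs_eq B hkM.
have -> : (cols B)`_k = gs_vec B k + \sum_(j < k) gs_mu B k j *: gs_vec B j by rewrite e subrK.
rewrite cdotDr cdot_sumr.
have hj : forall j : 'I_k, `|complex.Re (cdot w (gs_mu B k j *: gs_vec B j))| <= E /\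
                          `|complex.Im (cdot w (gs_mu B k j *: gs_vec B j))| <= E.
  move=> j; rewrite cdotZr.
  have hjk : (j < k < m.+1)%N by rewrite ltn_ord.
  have [h1 h2] := hL k j hjk.
  have [h3 h4] := hg j (ltnW (leq_trans (ltn_ord j) hk)).
  exact: (mu_term h1 h2 h3 h4).
have [hk1 hk2] := hg k hk.
rewrite ReD ImD [complex.Re (\sum_(i < k) _)]Re_sum [complex.Im (\sum_(i < k) _)]Im_sum.
rewrite mulrSr mulrDl mul1r [_ + E]addrC.
split; apply: le_trans (ler_normD _ _) _; apply: lerD => //;
  apply: le_trans (ler_norm_sum _ _ _) _;
  rewrite (_ : k%:R * E = \sum_(j < k) E); try by rewrite sumr_const card_ord mulr_natl.
all: by apply: ler_sum => j _; case: (hj j).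
Qed.

End Bounds.

Section Mat.
Variable R : realType.
Local Notation C := (R[i]).
Local Notation cj := (@conjc R).

Lemma gauss0 : gauss_int (0 : C).
Proof. by exists 0, 0. Qed.
Lemma gaussD (x y : C) : gauss_int x -> gauss_int y -> gauss_int (x + y).
Proof.
move=> [a [b ->]] [c [e ->]]; exists (a + c), (b + e).
by rewrite !intrD.
Qed.
Lemma gaussN (x : C) : gauss_int x -> gauss_int (- x).
Proof. by move=> [a [b ->]]; exists (- a), (- b); rewrite !intrN. Qed.
Lemma gaussM (x y : C) : gauss_int x -> gauss_int y -> gauss_int (x * y).
Proof.
move=> [a [b ->]] [c [e ->]]; exists (a * c - b * e), (a * e + b * c).
by rewrite !intrD !intrN !intrM.
Qed.
Lemma gaussJ (x : C) : gauss_int x -> gauss_int (cj x).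
Proof. by move=> [a [b ->]]; exists a, (- b); rewrite intrN. Qed.

Lemma gauss_mul m n p (A : 'M[C]_(m, n)) (B : 'M[C]_(n, p)) :
  gauss_mx A -> gauss_mx B -> gauss_mx (A *m B).
Proof.
move=> hA hB i j; rewrite mxE; apply: (big_ind (@gauss_int R)).
- exact: gauss0.
- exact: gaussD.
- by move=> k _; apply: gaussM.
Qed.

Lemma gauss_ctr m n (A : 'M[C]_(m, n)) : gauss_mx A -> gauss_mx (ctrmx A).
Proof. by move=> hA i j; rewrite /ctrmx !mxE; apply: gaussJ. Qed.

Lemma gauss_col m n (A : 'M[C]_(m, n)) j : gauss_mx A -> gauss_mx (col j A).
Proof. by move=> hA i k; rewrite mxE. Qed.

Lemma ctrmxM m n p (A : 'M[C]_(m, n)) (B : 'M[C]_(n, p)) :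
  ctrmx (A *m B) = ctrmx B *m ctrmx A.
Proof. by rewrite /ctrmx map_mxM trmx_mul. Qed.

Lemma ctrmxK m n (A : 'M[C]_(m, n)) : ctrmx (ctrmx A) = A.
Proof. by apply/matrixP => i j; rewrite /ctrmx !mxE conjcK. Qed.

Lemma ctrmx_inv n (A : 'M[C]_n) : ctrmx (invmx A) = invmx (ctrmx A).
Proof. by rewrite /ctrmx map_invmx trmx_inv. Qed.

Lemma ctrmx_unit n (A : 'M[C]_n) : (ctrmx A \in unitmx) = (A \in unitmx).
Proof. by rewrite /ctrmx unitmx_tr map_unitmx. Qed.

Lemma ctrmx_entry N M (B : 'M[C]_(N, M)) (y : 'cV[C]_N) k :
  (ctrmx B *m y) k 0 = cdot y (col k B).
Proof.
rewrite mxE /cdot; apply: eq_bigr => i _.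
by rewrite /ctrmx !mxE mulrC.
Qed.

Lemma gram_unit N M (H : 'M[C]_(N, M)) : \rank H = M ->
  ctrmx H *m H \in unitmx.
Proof.
move=> hr; rewrite -row_free_unit -kermx_eq0; apply/negPn/negP => hK.
have [i hi] : exists i, row i (kermx (ctrmx H *m H)) != 0.
  apply/existsP; apply: contraR hK; rewrite negb_exists => /forallP h.
  by apply/eqP/row_matrixP => i; rewrite row0; apply/eqP; have := h i; rewrite negbK.
set u := row i _ in hi.
have hu : u *m (ctrmx H *m H) = 0 by rewrite /u -row_mul mulmx_ker row0.
set z := ctrmx u.
have hz : ctrmx (H *m z) *m (H *m z) = 0.
  by rewrite ctrmxM /z ctrmxK mulmxA -(mulmxA u) hu mul0mx.
have hHz : H *m z = 0.
  apply: cdot_self_eq0; move/matrixP: hz => /(_ 0 0).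
  rewrite ctrmx_entry mxE => <-; rewrite /cdot; apply: eq_bigr => j _.
  by rewrite !mxE.
have hfree : row_free H^T by rewrite /row_free mxrank_tr hr.
have : z^T *m H^T == 0 by rewrite -trmx_mul hHz trmx0.
rewrite mulmx_free_eq0 // => /eqP hz0.
move: hi; rewrite -[u]ctrmxK -/z.
have -> : z = 0 by rewrite -[z]trmxK hz0 trmx0.
by apply/negP; rewrite negbK; apply/eqP/matrixP => a b; rewrite /ctrmx !mxE conjc0.
Qed.

End Mat.

Section Round.
Variable R : realType.
Local Notation C := (R[i]).
Local Notation cj := (@conjc R).

Lemma round_int (r : R) (a : int) : `|r| < 1/2 ->
  r ^+ 2 <= (r + a%:~R) ^+ 2 /\ ((r + a%:~R) ^+ 2 = r ^+ 2 -> a = 0).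
Proof.
rewrite ltr_norml => /andP[h1 h2].
case: (ltrgt0P a) => ha.
- have hx : (1 : R) <= a%:~R by rewrite ler1z -gtz0_ge1.
  set x := a%:~R in hx *.
  have hp : 0 < x * (2 * r + x) by apply: mulr_gt0; lra.
  split; first by nra.
  move=> e; exfalso; nra.
- have hx' : (1 : R) <= (- a)%:~R by rewrite ler1z -gtz0_ge1 oppr_gt0.
  have hx : (a%:~R : R) <= -1 by rewrite intrN in hx'; lra.
  set x := a%:~R in hx *.
  have hp : 0 < (- x) * (- (2 * r + x)) by apply: mulr_gt0; lra.
  split; first by nra.
  move=> e; exfalso; nra.
- by rewrite ha /= addr0.
Qed.

Lemma round_c (e t : C) : `|complex.Re e| < 1/2 -> `|complex.Im e| < 1/2 ->
  gauss_int t -> csq e <= csq (e + t) /\ (csq (e + t) = csq e -> t = 0).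
Proof.
move=> hr hi [a [b ->]].
case: e hr hi => p q /= hr hi.
have [h1 h2] := round_int a hr.
have [h3 h4] := round_int b hi.
rewrite /csq /=; split; first by apply: lerD.
move=> h.
have e1 : (p + a%:~R) ^+ 2 = p ^+ 2.
  apply/eqP; rewrite eq_le h1 andbT.
  have := lerD (lexx ((p + a%:~R) ^+ 2)) h3; rewrite h; lra.
have e2 : (q + b%:~R) ^+ 2 = q ^+ 2 by move: h; rewrite e1 => /addrI.
by rewrite (h2 e1) (h4 e2).
Qed.

End Round.

Lemma gauss_delta (R : realType) n p (i : 'I_n) (j : 'I_p) :
  gauss_mx (delta_mx i j : 'M[R[i]]_(n, p)).
Proof.
move=> a b; rewrite mxE; case: (_ && _) => /=.
  by exists 1, 0.
by exists 0, 0.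
Qed.

Lemma mx_cancel_aux (R : realType) N n (X : 'M[R[i]]_(N, n)) (G U : 'M[R[i]]_n) (z : 'cV[R[i]]_n) :
  G \in unitmx -> U \in unitmx -> X *m z = (X *m invmx G *m U) *m (invmx U *m G *m z).
Proof. by move=> hG hU; rewrite !mulmxA (mulmxK hU) (mulmxKV hG). Qed.

Lemma aux_lin1 (R : realType) (a X Y Ki E : R) :
  2 * a <= X + Y -> X <= Ki -> Y <= E -> Ki <= E -> a <= E.
Proof. move=> *; lra. Qed.
Lemma aux_lin2 (R : realType) (a t : R) : a <= t -> t <= 1/4 -> a < 1/2.
Proof. move=> *; lra. Qed.

Theorem lemma3 (R : realType) (M : nat) (hM : (1 <= M)%N) :
  exists c : R, 0 < c /\
  forall (N : nat) (H : 'M[R[i]]_(N, M)), (M <= N)%N -> \rank H = M ->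
  forall (d : R), is_min_dist H d ->
  forall (U : 'M[R[i]]_M) (B : 'M[R[i]]_(N, M)),
    unimodular U ->
    B = (H *m invmx (ctrmx H *m H)) *m U ->
    LLL_reduced B ->
  forall (x : 'cV[R[i]]_M) (w y : 'cV[R[i]]_N),
    gauss_mx x -> y = H *m x + w ->
    vnorm w < c * d ->
  forall xt : 'cV[R[i]]_M, closest_gauss (ctrmx B *m y) xt ->
    invmx (ctrmx U) *m xt = x.
Proof.
destruct M as [|m]; first by [].
pose Mr : R := m.+1%:R.
pose P : R := 4 ^+ m.+1.
pose K : R := 4 * Mr * P.
have hMr : 0 < Mr by rewrite ltr0n.
have hP1 : 1 <= P by apply: exprn_ege1; rewrite ler1n.
have hP : 0 < P by apply: lt_le_trans hP1.
have hK : 0 < K by rewrite !mulr_gt0.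
exists K^-1; split; first by rewrite invr_gt0.
move=> N H hMN hr d hd U B [hUg [hUu hUi]] hB hL x w y hx hy hw xt [hxt hmin].
set G := ctrmx H *m H.
have hG : G \in unitmx := gram_unit hr.
have hGc : ctrmx G = G by rewrite /G ctrmxM ctrmxK.
have hBH : ctrmx B *m H = ctrmx U.
  rewrite hB !ctrmxM ctrmx_inv hGc -!mulmxA mulVmx ?mulmx1 //.
have hUc : ctrmx U \in unitmx by rewrite ctrmx_unit.
have hdpos : 0 < d.
  have h0 : 0 <= vnorm w by apply: sqrtr_ge0.
  by have := le_lt_trans h0 hw; rewrite pmulr_rgt0 // invr_gt0.
set V := invmx (ctrmx U).
have hV : ctrmx U *m V = 1%:M by rewrite mulmxV.
have gV : gauss_mx V by rewrite /V -ctrmx_inv; apply: gauss_ctr.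
set z := V *m delta_mx (@ord_max m) (0 : 'I_1).
have gz : gauss_mx z by apply: gauss_mul => //; apply: gauss_delta.
have hUz : ctrmx U *m z = delta_mx ord_max 0 by rewrite /z mulmxA hV mul1mx.
have hz0 : z != 0.
  apply/eqP => h; move: hUz; rewrite h mulmx0 => /matrixP /(_ ord_max 0).
  by rewrite !mxE !eqxx /= => /eqP; rewrite eq_sym oner_eq0.
set dv := H *m z.
have hdv : d <= vnorm dv := hd.2 z gz hz0.
have hdual : forall j, (j < m.+1)%N -> cdot dv (cols B)`_j = (j == m)%:R.
  move=> j hj; rewrite (nth_cols B (Ordinal hj)) -ctrmx_entry /dv mulmxA hBH hUz mxE /=.
  by rewrite andbT.
have ha : dv = B *m (invmx U *m G *m z).
  by rewrite hB /dv; apply: mx_cancel_aux.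
have hnorm := dual_norm ha hdual.
have hd2 : d ^+ 2 <= sqnorm dv.
  rewrite -(sqr_sqrtr (sqnorm_ge0 dv)) !expr2.
  by apply: ler_pM => //; apply: ltW.
have hgm : sqnorm (gs_vec B m) * d ^+ 2 <= 1.
  by apply: le_trans (ler_wpM2l (sqnorm_ge0 _) hd2) _; rewrite hnorm.
have hgj : forall j, (j <= m)%N -> sqnorm (gs_vec B j) * d ^+ 2 <= P.
  move=> j hj; have h := lll_chain hL hj.
  have hpow : (4:R) ^+ (m - j) <= P.
    rewrite /P (_ : m.+1 = (m - j) + j.+1)%N; last by rewrite addnS subnK.
    by rewrite exprD ler_peMr ?exprn_ge0 // exprn_ege1 // ler1n.
  apply: le_trans (ler_wpM2r (sqr_ge0 d) h) _; rewrite -mulrA.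
  have h4 : (0:R) <= 4 ^+ (m - j) by rewrite exprn_ge0.
  by apply: le_trans (ler_wpM2l h4 hgm) _; rewrite mulr1.
have hw2 : sqnorm w < (K^-1 * d) ^+ 2.
  have h0 : 0 <= vnorm w by apply: sqrtr_ge0.
  have := ltr_pM h0 h0 hw hw.
  by rewrite -expr2 /vnorm sqr_sqrtr ?sqnorm_ge0 // -expr2.
pose E : R := (4 * Mr)^-1.
pose s : R := K / d ^+ 2.
have dn0 : d != 0 by rewrite gt_eqF.
have Kn0 : K != 0 by rewrite gt_eqF.
have Pn0 : P != 0 by rewrite gt_eqF.
have Mn0 : Mr != 0 by rewrite gt_eqF.
have hs : 0 < s by rewrite /s divr_gt0 // exprn_gt0.
have hE : forall j, (j <= m)%N -> `|complex.Re (cdot w (gs_vec B j))| <= E /\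
                                   `|complex.Im (cdot w (gs_vec B j))| <= E.
  move=> j hj.
  have b1 : s * sqnorm w <= K^-1.
    have e1 : s * (K^-1 * d) ^+ 2 = K^-1 by rewrite /s; field; rewrite ?Kn0 ?dn0.
    by apply: le_trans (ler_wpM2l (ltW hs) (ltW hw2)) _; rewrite e1.
  have b2 : sqnorm (gs_vec B j) / s <= E.
    have e1 : sqnorm (gs_vec B j) / s = (sqnorm (gs_vec B j) * d ^+ 2) / K.
      by rewrite /s; field; rewrite ?Kn0 ?dn0.
    have e2 : P / K = E by rewrite /K /E; field; rewrite Pn0 andbT; rewrite -mulrS pnatr_eq0.
    by rewrite e1 -e2; apply: ler_wpM2r (hgj j hj); rewrite invr_ge0 ltW.
  have b3 : K^-1 <= E.
    rewrite /E lef_pV2 ?posrE ?mulr_gt0 // /K ler_peMr // mulr_ge0 // ltW.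
  have := cs_Re w (gs_vec B j) hs; have := cs_Im w (gs_vec B j) hs.
  move=> c1 c2; split; apply: aux_lin1 b1 b2 b3; [exact: c2 | exact: c1].
have hcomb := comb hL hE.
have hk : forall k, (k <= m)%N -> k.+1%:R * E <= 1/4.
  move=> k hk.
  have e1 : Mr * E = 1/4 by rewrite /E; field; rewrite -mulrS pnatr_eq0.
  rewrite -e1; apply: ler_wpM2r; first by rewrite invr_ge0 mulr_ge0 // ltW.
  by rewrite ler_nat.
set e := ctrmx B *m w.
have he : forall k : 'I_m.+1, `|complex.Re (e k 0)| < 1/2 /\ `|complex.Im (e k 0)| < 1/2.
  move=> k; rewrite /e ctrmx_entry -nth_cols.
  have hkm : (k <= m)%N by rewrite -ltnS ltn_ord.
  have [h1 h2] := hcomb k hkm; have := hk k hkm.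
  by move=> h3; split; apply: aux_lin2 h3; [exact: h1 | exact: h2].
set x' := ctrmx U *m x.
have gx' : gauss_mx x' by apply: gauss_mul => //; apply: gauss_ctr.
have hv : ctrmx B *m y = x' + e by rewrite hy mulmxDr mulmxA hBH.
have hle : sqnorm (ctrmx B *m y - xt) <= sqnorm (ctrmx B *m y - x').
  by have := hmin x' gx'; rewrite /vnorm ler_sqrt // sqnorm_ge0.
rewrite hv [x' + e]addrC addrK in hle.
have key : forall k : 'I_m.+1, csq (e k 0) <= csq ((e + x' - xt) k 0) /\
            (csq ((e + x' - xt) k 0) = csq (e k 0) -> x' k 0 - xt k 0 = 0).
  move=> k; have -> : (e + x' - xt) k 0 = e k 0 + (x' k 0 - xt k 0).
    by rewrite !mxE addrA.
  have [h1 h2] := he k.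
  apply: round_c h1 h2 _.
  by apply: gaussD; [exact: gx' | apply: gaussN; exact: hxt].
have hsum : \sum_(k < m.+1) (csq ((e + x' - xt) k 0) - csq (e k 0)) = 0.
  apply/eqP; rewrite eq_le; apply/andP; split.
    rewrite sumrB subr_le0; exact: hle.
  by apply: sumr_ge0 => k _; rewrite subr_ge0; case: (key k).
have hxt' : xt = x'.
  apply/matrixP => k j; rewrite ord1.
  have hnn : forall k' : 'I_m.+1, true -> 0 <= csq ((e + x' - xt) k' 0) - csq (e k' 0).
    by move=> k' _; rewrite subr_ge0; case: (key k').
  have := psumr_eq0P hnn hsum (i := k) isT.
  move/eqP; rewrite subr_eq0 => /eqP h.
  by have := (key k).2 h; move/eqP; rewrite subr_eq0 => /eqP ->.
by rewrite hxt' /x' mulKmx.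
Qed.
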